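(* For every $\ell \in \mathbb{N}$ and every $k$-tree $G$ there exists a $k$-tree $\bar{G}$ such that every $\ell$-local book embedding of $\bar{G}$ contains a forest embedding of $G$.
   Context: All graphs are finite and simple; $k \ge 1$ is an integer. A graph is a $k$-tree if it is isomorphic to $K_{k+1}$, or it is obtained from a smaller $k$-tree $G'$ by adding one new vertex whose neighborhood in $G'$ is a clique of order $k$. A linear embedding of $G=(V,E)$ is a pair $(\prec,\mathcal{P})$ where $\prec$ is a total ordering of $V$ and $\mathcal{P}$ is a partition of $E$ into parts called pages. Two edges $uv, xy$ with $u\prec v$, $x \prec y$ cross if $u \prec x \prec v \prec y$ or $x \prec u \prec y \prec v$. A book embedding is a linear embedding in which no two crossing edges lie on the same page. For a book embedding and a vertex $v$, $\mathcal{P}_v$ is the set of pages containing an edge incident to $v$; the embedding is $\ell$-local if $|\mathcal{P}_v| \le \ell$ for all $v$. A linear embedding is a forest embedding if the edges on each page form a forest. A book embedding $(\prec,\mathcal{P})$ of a graph $\bar G = (\bar V, \bar E)$ contains a forest embedding of $G$ if there is a set $X \subseteq \bar V$ with $G \cong \bar G[X]$ such that the restriction of $(\prec,\mathcal{P})$ to $\bar G[X]$ (the ordering $\prec$ restricted to $X$ and the partition of $E(\bar G[X])$ induced by the pages) is a forest embedding of $\bar G[X]$. *)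

(* Defs.v *)
From mathcomp Require Import all_boot.
Set Implicit Arguments. Unset Strict Implicit. Unset Printing Implicit Defensive.

Definition simple_graph (T : finType) (e : rel T) : Prop :=
  symmetric e /\ irreflexive e.

Definition is_clique (T : finType) (e : rel T) (S : {set T}) : Prop :=
  forall x y, x \in S -> y \in S -> x != y -> e x y.

Inductive ktree_on (T : finType) (e : rel T) (k : nat) : {set T} -> Prop :=
| ktree_base (S : {set T}) : #|S| = k.+1 -> is_clique e S -> ktree_on e k S
| ktree_step (S : {set T}) (v : T) : v \in S -> ktree_on e k (S :\ v) ->
    #|[set u in S | e v u]| = k -> is_clique e [set u in S | e v u] ->
    ktree_on e k S.

Definition is_ktree (T : finType) (e : rel T) (k : nat) : Prop :=
  simple_graph e /\ ktree_on e k [set: T].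

(* Linear embedding: total order given by an injective map ord : T -> nat
   (u precedes v iff ord u < ord v); partition of edges into pages given by
   a page label p u v (symmetric on edges). *)
Definition linear_embedding (T : finType) (e : rel T)
  (ord : T -> nat) (p : T -> T -> nat) : Prop :=
  injective ord /\ (forall u v, e u v -> p u v = p v u).

Definition crossing (T : finType) (ord : T -> nat) (u v x y : T) : bool :=
  (ord u < ord x < ord v) && (ord v < ord y).

Definition book_embedding (T : finType) (e : rel T)
  (ord : T -> nat) (p : T -> T -> nat) : Prop :=
  linear_embedding e ord p /\
  forall u v x y, e u v -> e x y -> crossing ord u v x y -> p u v != p x y.

Definition pages_at (T : finType) (e : rel T) (p : T -> T -> nat) (v : T)
  : seq nat := undup [seq p v u | u <- enum T & e v u].

Definition local_book_embedding (l : nat) (T : finType) (e : rel T)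
  (ord : T -> nat) (p : T -> T -> nat) : Prop :=
  book_embedding e ord p /\ forall v, size (pages_at e p v) <= l.

Definition acyclic_on (T : finType) (r : rel T) (X : {set T}) : Prop :=
  ~ exists s : seq T, [/\ uniq s, 2 < size s, all (mem X) s & cycle r s].

Definition page_rel (T : finType) (e : rel T) (p : T -> T -> nat) (i : nat)
  : rel T := fun x y => e x y && (p x y == i).

Definition contains_forest_embedding (T : finType) (e : rel T)
  (Tb : finType) (eb : rel Tb) (ord : Tb -> nat) (p : Tb -> Tb -> nat) : Prop :=
  exists f : T -> Tb,
    [/\ injective f, (forall a b, e a b = eb (f a) (f b)) &
        forall i, acyclic_on (page_rel eb p i) (f @: T)].

(* Main.v *)
Require Import Defs.
From mathcomp Require Import all_boot zify.
Set Implicit Arguments. Unset Strict Implicit. Unset Printing Implicit Defensive.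

Lemma acyc_mono (T : finType) (r : rel T) (X Y : {set T}) :
  X \subset Y -> acyclic_on r Y -> acyclic_on r X.
Proof.
move=> sXY HY [s [us s2 alls cs]]; apply: HY; exists s; split=> //.
by apply/allP=> x /(allP alls) /= xX; exact: (subsetP sXY).
Qed.

Lemma acyc_add (T : finType) (r : rel T) (X : {set T}) (w : T) :
  acyclic_on r X ->
  (forall a b, a \in X -> b \in X -> r w a -> r w b -> a = b) ->
  (forall a, r a w = r w a) ->
  acyclic_on r (w |: X).
Proof.
move=> HX Hw Hsym [s [us s2 alls cs]].
case: (boolP (w \in s)) => ws; last first.
  apply: HX; exists s; split=> //; apply/allP=> x xs.
  have := allP alls x xs; rewrite /= !inE; case/orP=> // /eqP xw.
  by rewrite -xw xs in ws.
case: (rot_to ws) => i s' Hrot.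
have us1 : uniq (w :: s') by rewrite -Hrot rot_uniq.
have s21 : 2 < size (w :: s') by rewrite -Hrot size_rot.
have all1 : all (mem (w |: X)) (w :: s').
  by apply/allP=> x; rewrite -Hrot mem_rot; exact: (allP alls).
have cs1 : cycle r (w :: s') by rewrite -Hrot rot_cycle.
move: us1 s21 all1 cs1; case: s' Hrot => [|a [|b t]] //= Hrot us1 _ all1 cs1.
case/and4P: us1 => wnin anin _ _.
case/and4P: all1 => _ aX _ _.
case/and3P: cs1 => rwa _; rewrite rcons_path => /andP [_ rlw].
have lt : last b t \in b :: t by exact: mem_last.
have lnw : last b t != w.
  by apply: contraNneq wnin => <-; rewrite inE lt orbT.
have lna : last b t != a.
  by apply: contraNneq anin => <-.
have Xa : a \in X.
  move: aX; rewrite /= !inE => /orP [/eqP aw|//].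
  by rewrite aw !inE eqxx in wnin.
have Xl : last b t \in X.
  have : last b t \in s by rewrite -(mem_rot i) Hrot in_cons in_cons lt !orbT.
  by move/(allP alls); rewrite /= !inE (negbTE lnw).
have := Hw _ _ Xa Xl rwa; rewrite -Hsym => /(_ rlw) al.
by rewrite al eqxx in lna.
Qed.

Lemma ktree_map (T1 T2 : finType) (e1 : rel T1) (e2 : rel T2) (k : nat)
  (f : T1 -> T2) : injective f -> (forall x y, e1 x y = e2 (f x) (f y)) ->
  forall S, ktree_on e1 k S -> ktree_on e2 k (f @: S).
Proof.
move=> finj fe S; elim=> {S} [S cS clS | S v vS _ IH cN clN].
  apply: ktree_base; first by rewrite card_imset.
  move=> x y /imsetP [a aS ->] /imsetP [b bS ->] ne; rewrite -fe.
  by apply: clS => //; apply: contraNneq ne => ->.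
have EN : [set u in f @: S | e2 (f v) u] = f @: [set u in S | e1 v u].
  apply/setP=> u; rewrite !inE; apply/andP/imsetP.
    by case=> /imsetP [a aS ->]; rewrite -fe => h; exists a; rewrite // inE aS.
  by case=> a; rewrite inE => /andP [aS h] ->; rewrite -fe mem_imset.
apply: (@ktree_step _ _ _ _ (f v)); first by rewrite mem_imset.
- suff -> : (f @: S) :\ f v = f @: (S :\ v) by [].
  apply/setP=> u; rewrite !inE; apply/andP/imsetP.
    case=> ne /imsetP [a aS ua]; exists a => //; rewrite !inE aS andbT; apply: contraNneq ne => av; by rewrite ua av.
  by case=> a; rewrite !inE => /andP [ne aS] ->; rewrite mem_imset // (inj_eq finj) ne.
- by rewrite EN card_imset.
- rewrite EN => x y /imsetP [a aS ->] /imsetP [b bS ->] ne; rewrite -fe.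
  by apply: clN => //; apply: contraNneq ne => ->.
Qed.

Lemma core2 (U : Type) (o : U -> nat) (HL : U -> U -> bool) (a b x y : U)
  (C : forall u v w z, HL u v -> HL w z -> o u < o w -> o w < o v -> o v < o z -> False)
  (h1 : HL a x) (h2 : HL x a) (h3 : HL a y) (h4 : HL y a)
  (h5 : HL b x) (h6 : HL x b) (h7 : HL b y) (h8 : HL y b) :
  o a < o b -> o x <> o y -> o a <> o x -> o b <> o x -> o a <> o y -> o b <> o y ->
  (o a < o x < o b) = (o a < o y < o b) -> False.
Proof.
wlog: x y h1 h2 h3 h4 h5 h6 h7 h8 / o x < o y.
  move=> W ab xy; case: (ltngtP (o x) (o y)) => [lt|lt|eq]; last by [].
    by apply: W.
  move=> xa xb ya yb st; apply: (W y x) => //; lia.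
move=> xy ab _ xa xb ya yb.
have [mx|mx] := boolP (o a < o x < o b).
  move=> my; have /andP [ay yb'] : o a < o y < o b by rewrite -my.
  case/andP: mx => ax xb'.
  by apply: (C a y x b) => //.
move=> my; have nmy : ~~ (o a < o y < o b) by rewrite -my.
move: mx nmy; rewrite !negb_and -!leqNgt => /orP [h|h] /orP [g|g].
- by apply: (C x a y b) => //; lia.
- by apply: (C x b a y) => //; lia.
- lia.
- by apply: (C a x b y) => //; lia.
Qed.

Lemma k23 (U : finType) (eb : rel U) (ord : U -> nat) (p : U -> U -> nat) (pi : nat)
  (a b x y z : U) : book_embedding eb ord p ->
  a != b -> x != y -> y != z -> x != z ->
  (forall h t, h \in [:: a; b] -> t \in [:: x; y; z] ->
     [/\ h != t, eb h t, eb t h, p h t = pi & p t h = pi]) -> False.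
Proof.
move=> [[inj _] BE] ab xy yz xz H.
pose HL u v := eb u v && (p u v == pi).
have C : forall u v w z, HL u v -> HL w z -> ord u < ord w -> ord w < ord v -> ord v < ord z -> False.
  move=> u v w z' /andP [e1 /eqP p1] /andP [e2 /eqP p2] l1 l2 l3.
  have := BE u v w z' e1 e2; rewrite /crossing l1 l2 l3 p1 p2 eqxx => /(_ isT) //.
have ne : forall u v, u != v -> ord u <> ord v.
  by move=> u v; apply: contraNnot => /inj ->.
have HLs : forall h t, h \in [:: a; b] -> t \in [:: x; y; z] -> [/\ HL h t, HL t h & h != t].
  by move=> h t hh tt; case: (H h t hh tt) => ht e1 e2 p1 p2; rewrite /HL e1 e2 p1 p2 eqxx.
have ma : a \in [:: a; b] by rewrite !inE eqxx.
have mb : b \in [:: a; b] by rewrite !inE eqxx orbT.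
have mx : x \in [:: x; y; z] by rewrite !inE eqxx.
have my : y \in [:: x; y; z] by rewrite !inE eqxx orbT.
have mz : z \in [:: x; y; z] by rewrite !inE eqxx !orbT.
case: (HLs a x ma mx) => ax xa nax.
case: (HLs a y ma my) => ay ya nay.
case: (HLs a z ma mz) => az za naz.
case: (HLs b x mb mx) => bx xb nbx.
case: (HLs b y mb my) => by' yb nby.
case: (HLs b z mb mz) => bz zb nbz.
have oxy := ne _ _ xy; have oyz := ne _ _ yz; have oxz := ne _ _ xz.
have oab := ne _ _ ab.
have oax := ne _ _ nax; have oay := ne _ _ nay; have oaz := ne _ _ naz.
have obx := ne _ _ nbx; have oby := ne _ _ nby; have obz := ne _ _ nbz.
wlog lab : a b ax xa ay ya az za bx xb by' yb bz zb oab oax oay oaz obx oby obz {ab nax nay naz nbx nby nbz ma mb HLs H} / ord a < ord b.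
  move=> W; case: (ltngtP (ord a) (ord b)) => [lt|lt|//].
    by apply: (W a b).
  by apply: (W b a) => //; apply/nesym.
have : [|| (ord a < ord x < ord b) == (ord a < ord y < ord b),
           (ord a < ord x < ord b) == (ord a < ord z < ord b) |
           (ord a < ord y < ord b) == (ord a < ord z < ord b)].
  by case: (ord a < ord x < ord b); case: (ord a < ord y < ord b); case: (ord a < ord z < ord b).
case/or3P => /eqP st.
- exact: (core2 C ax xa ay ya bx xb by' yb lab oxy oax obx oay oby st).
- exact: (core2 C ax xa az za bx xb bz zb lab oxz oax obx oaz obz st).
- exact: (core2 C ay ya az za by' yb bz zb lab oyz oay oby oaz obz st).
Qed.

Definition kclq (T : finType) (e : rel T) (k : nat) (K : {set T}) : bool :=
  (#|K| == k) && [forall x in K, forall y in K, (x != y) ==> e x y].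

Lemma kclqP (T : finType) (e : rel T) (k : nat) (K : {set T}) :
  kclq e k K -> #|K| = k /\ is_clique e K.
Proof.
case/andP=> /eqP cK /forallP H; split=> // x y xK yK ne.
by have := H x; rewrite xK /= => /forallP /(_ y); rewrite yK ne.
Qed.

Lemma kclqI (T : finType) (e : rel T) (k : nat) (K : {set T}) :
  #|K| = k -> is_clique e K -> kclq e k K.
Proof.
move=> cK cl; rewrite /kclq cK eqxx /=; apply/forallP=> x; apply/implyP=> xK.
by apply/forallP=> y; apply/implyP=> yK; apply/implyP=> ne; exact: cl.
Qed.

Section Phi.
Variables (T : finType) (e : rel T) (k l : nat).

Definition NN := (#|T| * #|T| * l.+1).*2.+1.
Definition NV := ({K : {set T} | kclq e k K} * 'I_NN)%type.
Definition PT : finType := (T + NV)%type.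
Definition pe : rel PT := fun x y =>
  match x, y with
  | inl a, inl b => e a b
  | inl a, inr w => a \in sval w.1
  | inr w, inl a => a \in sval w.1
  | inr _, inr _ => false
  end.

Lemma inl_inj : injective (@inl T NV). Proof. by move=> a b []. Qed.

Lemma inl_inl (a : T) (B : {set T}) : (inl a \in [set @inl T NV x | x in B]) = (a \in B).
Proof. by rewrite mem_imset //; exact: inl_inj. Qed.
Lemma inr_inl (w : NV) (B : {set T}) : (inr w \in [set @inl T NV x | x in B]) = false.
Proof. by apply/imsetP => [[x _]]. Qed.
Lemma inl_inr (a : T) (B : {set NV}) : (inl a \in [set @inr T NV x | x in B]) = false.
Proof. by apply/imsetP => [[x _]]. Qed.
Lemma inr_inr (w : NV) (B : {set NV}) : (inr w \in [set @inr T NV x | x in B]) = (w \in B).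
Proof. by rewrite mem_imset // => x y []. Qed.

Lemma pe_simple : simple_graph e -> simple_graph pe.
Proof.
move=> [sy ir]; split.
  by move=> [a|w] [b|w'] //=; exact: sy.
by move=> [a|w] //=; exact: ir.
Qed.

Lemma pe_ktree : is_ktree e k -> is_ktree pe k.
Proof.
move=> [sg kt]; split; first exact: pe_simple.
have base : ktree_on pe k [set @inl T NV x | x in [set: T]].
  by apply: (ktree_map inl_inj) => //.
suff H : forall A : {set NV}, ktree_on pe k ([set @inl T NV x | x in [set: T]] :|: [set @inr T NV x | x in A]).
  have := H setT; suff -> : [set @inl T NV x | x in [set: T]] :|: [set @inr T NV x | x in [set: NV]] = [set: PT] by [].
  by apply/setP => [[a|w]]; rewrite !inE ?inl_inl ?inr_inr ?inE ?orbT.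
move=> A; have [n] := ubnP #|A|; elim: n A => // n IH A cA.
case: (set_0Vmem A) => [->|[w wA]].
  by rewrite imset0 setU0.
have EN : [set u in [set @inl T NV x | x in [set: T]] :|: [set @inr T NV x | x in A] | pe (inr w) u]
          = [set @inl T NV x | x in sval w.1].
  apply/setP => [[a|w']]; rewrite !inE ?inl_inl ?inl_inr ?inr_inl ?inr_inr ?inE //=.
  by rewrite andbF.
apply: (@ktree_step _ _ _ _ (inr w)).
- by rewrite !inE inr_inr wA orbT.
- have -> : ([set @inl T NV x | x in [set: T]] :|: [set @inr T NV x | x in A]) :\ inr w
           = [set @inl T NV x | x in [set: T]] :|: [set @inr T NV x | x in A :\ w].
    apply/setP => [[a|w']]; rewrite !inE ?inl_inl ?inl_inr ?inr_inl ?inr_inr ?inE //=.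
  apply: IH; move: cA; rewrite (cardsD1 w A) wA; lia.
- rewrite EN card_imset; last exact: inl_inj.
  by case: (kclqP (svalP w.1)).
- rewrite EN => x y /imsetP [a aK ->] /imsetP [b bK ->] ne /=.
  case: (kclqP (svalP w.1)) => _ cl; apply: cl => //; apply: contraNneq ne => ->.
Qed.

Lemma restrict ord p : local_book_embedding l pe ord p ->
  local_book_embedding l e (fun a => ord (inl a)) (fun a b => p (inl a) (inl b)).
Proof.
move=> [[[inj sym] cr] loc]; split; [split; [split|] |].
- by move=> a b /inj [].
- by move=> u v h; exact: (sym (inl u) (inl v) h).
- by move=> u v x y euv exy c; exact: (cr (inl u) (inl v) (inl x) (inl y) euv exy c).
- move=> v; apply: leq_trans (loc (inl v)); apply: uniq_leq_size; first exact: undup_uniq.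
  move=> i; rewrite !mem_undup => /mapP [u]; rewrite mem_filter mem_enum andbT => euv ->.
  by apply/mapP; exists (inl u); rewrite // mem_filter mem_enum andbT.
Qed.

Lemma acyc_inl (r : rel PT) (r' : rel T) (X : {set T}) :
  (forall a b, r (inl a) (inl b) = r' a b) -> acyclic_on r' X ->
  acyclic_on r [set @inl T NV x | x in X].
Proof.
move=> hr HX [s [us s2 alls cs]]; apply: HX.
pose unl (x : PT) : option T := if x is inl a then Some a else None.
have ocan : ocancel unl inl by case.
have E : map inl (pmap unl s) = s.
  rewrite (pmap_filter ocan); apply/all_filterP; apply/allP => x /(allP alls) /=.
  by case: x => // w; rewrite inr_inl.
exists (pmap unl s); split.
- by rewrite -(map_inj_uniq inl_inj) E.
- by rewrite -(size_map (@inl T NV)) E.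
- apply/allP => a; rewrite -(mem_map inl_inj) E => /(allP alls) /=.
  by rewrite inl_inl.
- have : cycle r (map inl (pmap unl s)) by rewrite E.
  by rewrite cycle_map; rewrite (@eq_cycle _ _ r').
Qed.

Lemma pe_sym : symmetric e -> symmetric pe.
Proof. by move=> sy [a|w] [b|w'] //=; exact: sy. Qed.



Lemma ext ord p : local_book_embedding l pe ord p -> forall K : {K | kclq e k K},
  exists j : 'I_NN, forall c1 c2, c1 \in sval K -> c2 \in sval K ->
    p (inr (K, j)) (inl c1) = p (inr (K, j)) (inl c2) -> c1 = c2.
Proof.
move=> LBE K; case: (LBE) => [[[inj sym] cr] loc].
have BE : book_embedding pe ord p by case: LBE.
pose w (j : 'I_NN) : PT := inr (K, j).
pose bad j (c : T * T) := [&& c.1 \in sval K, c.2 \in sval K, c.1 != c.2 &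
                             p (w j) (inl c.1) == p (w j) (inl c.2)].
case: (boolP [exists j, ~~ [exists c, bad j c]]) => [/existsP [j /existsPn nb] | /existsPn allb].
  exists j => c1 c2 m1 m2 hp; apply/eqP; apply: contraNT (nb (c1, c2)) => ne.
  by rewrite /bad /= m1 m2 ne /w hp eqxx.
have hb : forall j, exists c, bad j c.
  by move=> j; have := allb j; rewrite negbK => /existsP.
case: (hb ord0) => c0 _.
pose pg (c1 : T) := pages_at pe p (inl c1).
pose g (j : 'I_NN) : T * T * 'I_l.+1 :=
  if [pick c | bad j c] is Some c
  then (c.1, c.2, inord (index (p (w j) (inl c.1)) (pg c.1)))
  else (c0.1, c0.2, ord0).
have G : forall j c1 c2 i, g j = (c1, c2, i) ->
    bad j (c1, c2) /\ p (w j) (inl c1) = nth 0 (pg c1) i.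
  move=> j c1 c2 i; rewrite /g; case: pickP => [c bc | none]; last first.
    by case: (hb j) => c; rewrite none.
  case: c bc => d1 d2 bc /=; case=> <- <- <-; split=> //.
  set pi := p (w j) (inl d1).
  have d1K : d1 \in sval K by case/and4P: bc.
  have mem : pi \in pg d1.
    rewrite /pg /pages_at mem_undup; apply/mapP; exists (w j).
      by rewrite mem_filter mem_enum andbT /=.
    by rewrite /pi sym //=.
  have lt : index pi (pg d1) < l.+1.
    by rewrite ltnS; apply: leq_trans (loc (inl d1)); apply: ltnW; rewrite index_mem.
  by rewrite inordK // nth_index.
have [d hd] : exists d, 2 < #|[set j | g j == d]|.
  apply/existsP; apply: contraT => /existsPn H.
  have : NN <= (#|T| * #|T| * l.+1).*2.
    rewrite -{1}(card_ord NN) -sum1_card (partition_big g xpredT) //=.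
    apply: leq_trans (_ : \sum_(d : T * T * 'I_l.+1) 2 <= _).
      apply: leq_sum => d _; have := H d; rewrite -leqNgt.
      by apply: leq_trans; rewrite -sum1_card; apply: eq_leq; apply: eq_bigl => j; rewrite !inE.
    by rewrite sum_nat_const !card_prod card_ord muln2.
  by rewrite /NN ltnn.
case/card_gt2P: hd => j1 [j2 [j3 [[m1 m2 m3] [n12 n23 n31]]]].
case: d m1 m2 m3 => [[c1 c2] i]; rewrite !inE => /eqP /G [b1 e1] /eqP /G [b2 e2] /eqP /G [b3 e3].
case/and4P: (b1) => c1K c2K c12 /eqP q1.
exfalso; apply: (@k23 _ _ _ _ (nth 0 (pg c1) i) (inl c1) (inl c2) (w j1) (w j2) (w j3) BE).
- by apply: contra c12 => /eqP [->].
- by apply: contra n12 => /eqP [->].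
- by apply: contra n23 => /eqP [->].
- by rewrite eq_sym; apply: contra n31 => /eqP [->].
have Hj : forall j, bad j (c1, c2) -> p (w j) (inl c1) = nth 0 (pg c1) i ->
   forall c, c \in [:: c1; c2] -> forall t, t = w j ->
   [/\ inl c != t, pe (inl c) t, pe t (inl c), p (inl c) t = nth 0 (pg c1) i
      & p t (inl c) = nth 0 (pg c1) i].
  move=> j /and4P [k1 k2 _ /eqP q] hq c; rewrite !inE => /orP [] /eqP -> t ->.
    by rewrite /= k1 -sym //= hq.
  by rewrite /= k2 -sym //= -q hq.
have m1 : c1 \in [:: c1; c2] by rewrite !inE eqxx.
have m2 : c2 \in [:: c1; c2] by rewrite !inE eqxx orbT.
move=> h t; rewrite !inE => /orP [] /eqP -> /or3P [] /eqP ->.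
- exact: (Hj j1 b1 e1 c1 m1).
- exact: (Hj j2 b2 e2 c1 m1).
- exact: (Hj j3 b3 e3 c1 m1).
- exact: (Hj j1 b1 e1 c2 m2).
- exact: (Hj j2 b2 e2 c2 m2).
- exact: (Hj j3 b3 e3 c2 m2).
Qed.

Lemma step_ok ord p : symmetric e -> local_book_embedding l pe ord p ->
  forall K : {K | kclq e k K}, exists j : 'I_NN, forall X : {set T},
   (forall i, acyclic_on (page_rel e (fun a b => p (inl a) (inl b)) i) X) ->
   forall i, acyclic_on (page_rel pe p i) (inr (K, j) |: [set @inl T NV x | x in X]).
Proof.
move=> sy LBE K; case: (ext LBE K) => j Hj; exists j => X HX i.
case: (LBE) => [[[inj sym] _] _].
apply: acyc_add.
- by apply: (acyc_inl (r' := page_rel e (fun a b => p (inl a) (inl b)) i)).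
- move=> a b /imsetP [a' _ ->] /imsetP [b' _ ->] /andP [ha /eqP pa] /andP [hb /eqP pb].
  by congr inl; apply: Hj => //; rewrite pa pb.
- move=> a; rewrite /page_rel [pe a _](pe_sym sy).
  case h: (pe (inr (K, j)) a) => //=; rewrite sym //.
Qed.
End Phi.

Lemma base_iter (k l j : nat) : j <= k -> exists (Tb : finType) (eb : rel Tb),
  is_ktree eb k /\ forall ord p, local_book_embedding l eb ord p ->
  exists K Y : {set Tb}, [/\ kclq eb k K, Y \subset K, #|Y| = j &
     forall i, acyclic_on (page_rel eb p i) Y].
Proof.
elim: j => [_ | j IH jk].
  exists ('I_k.+1 : finType), (fun x y : 'I_k.+1 => x != y); split.
    split; first by split; [move=> x y; rewrite eq_sym | move=> x; rewrite /= eqxx].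
    by apply: ktree_base; [rewrite cardsT card_ord | move=> x y _ _].
  move=> ord p _; exists [set~ ord0], set0; split.
  - by apply: kclqI; [rewrite cardsC1 card_ord | move=> x y _ _].
  - exact: sub0set.
  - exact: cards0.
  - move=> i [s [_ s2 alls _]]; case: s s2 alls => [|x s] //= _.
    by rewrite inE.
case: IH => [|Tb [eb [kt H]]]; first exact: ltnW.
exists (PT eb k l), (@pe Tb eb k l); split; first exact: pe_ktree.
move=> ord p LBE; have LBE' := restrict LBE.
case: (H _ _ LBE') => K [Y [kK YK cY acY]].
have sy : symmetric eb by case: kt => [[]].
case: (step_ok sy LBE (exist _ K kK)) => jj Hjj.
case: (kclqP kK) => cK clK.
have [r rKY] : exists r, r \in K :\: Y.
  by apply/card_gt0P; rewrite cardsD (setIidPr YK) cY cK; lia.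
move: rKY; rewrite inE => /andP [rY rK].
exists (inr (exist _ K kK, jj) |: [set @inl Tb (NV eb k l) x | x in K :\ r]),
       (inr (exist _ K kK, jj) |: [set @inl Tb (NV eb k l) x | x in Y]); split.
- apply: kclqI.
    rewrite cardsU1 inr_inl card_imset; last exact: inl_inj.
    by have := cardsD1 r K; rewrite rK cK /=; lia.
  move=> x y; rewrite !inE => /orP [/eqP -> | /imsetP [a aK ->]] /orP [/eqP -> | /imsetP [b bK ->]] ne.
  + by rewrite eqxx in ne.
  + by move: bK; rewrite !inE /= => /andP [].
  + by move: aK; rewrite !inE /= => /andP [].
  + move: aK bK; rewrite !inE /= => /andP [_ aK] /andP [_ bK].
    apply: (clK a b aK bK); by apply: contraNneq ne => ->.
- apply/subsetP => x; rewrite !inE => /orP [->|/imsetP [a aY ->]] //.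
  rewrite inl_inl !inE (subsetP YK a aY) andbT; apply/orP; right.
  by apply: contraNneq rY => <-.
- by rewrite cardsU1 inr_inl card_imset ?cY //; exact: inl_inj.
- exact: Hjj.
Qed.

Lemma base_graph (k l : nat) : exists (Tb : finType) (eb : rel Tb),
  is_ktree eb k /\ forall ord p, local_book_embedding l eb ord p ->
  exists Y : {set Tb}, [/\ #|Y| = k.+1, is_clique eb Y &
     forall i, acyclic_on (page_rel eb p i) Y].
Proof.
case: (base_iter l (leqnn k)) => Tb [eb [kt H]].
exists (PT eb k l), (@pe Tb eb k l); split; first exact: pe_ktree.
move=> ord p LBE; have LBE' := restrict LBE.
case: (H _ _ LBE') => K [Y [kK YK cY acY]].
have sy : symmetric eb by case: kt => [[]].
case: (step_ok sy LBE (exist _ K kK)) => jj Hjj.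
case: (kclqP kK) => cK clK.
have EY : Y = K by apply/eqP; rewrite eqEcard YK cY cK leqnn.
subst Y.
exists (inr (exist _ K kK, jj) |: [set @inl Tb (NV eb k l) x | x in K]); split.
- rewrite cardsU1 inr_inl card_imset; last exact: inl_inj.
  by rewrite cK.
- move=> x y; rewrite !inE => /orP [/eqP -> | /imsetP [a aK ->]] /orP [/eqP -> | /imsetP [b bK ->]] ne //.
    by rewrite eqxx in ne.
  apply: (clK a b aK bK); by apply: contraNneq ne => ->.
- exact: Hjj.
Qed.

Lemma main_gen (T : finType) (e : rel T) (k l : nat) : simple_graph e ->
  forall S, ktree_on e k S -> exists (Tb : finType) (eb : rel Tb),
  is_ktree eb k /\ forall ord p, local_book_embedding l eb ord p ->
  exists f : T -> Tb, [/\ {in S &, injective f},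
     {in S &, forall a b, e a b = eb (f a) (f b)} &
     forall i, acyclic_on (page_rel eb p i) (f @: S)].
Proof.
move=> [sy ir] S0 kS; elim: kS => {S0} [S cS clS | S v vS _ IH cN clN].
  case: (base_graph k l) => Tb [eb [kt H]]; exists Tb, eb; split => // ord p LBE.
  case: (H _ _ LBE) => Y [cY clY acY].
  have [y0 _] : exists y, y \in Y by apply/card_gt0P; rewrite cY.
  pose f u := nth y0 (enum Y) (index u (enum S)).
  have fin : forall u, u \in S -> f u \in Y.
    move=> u uS; rewrite -mem_enum /f mem_nth //.
    by rewrite -cardE cY -cS cardE index_mem mem_enum.
  have finj : {in S &, injective f}.
    move=> u1 u2 h1 h2 /eqP; rewrite /f nth_uniq ?enum_uniq //; first last.
    - by rewrite -cardE cY -cS cardE index_mem mem_enum.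
    - by rewrite -cardE cY -cS cardE index_mem mem_enum.
    move=> /eqP h.
    rewrite -(nth_index u1 (_ : u1 \in enum S)) ?mem_enum // h.
    by rewrite nth_index // mem_enum.
  exists f; split => //.
  - move=> a b aS bS; case: (eqVneq a b) => [->|ne].
      by case: kt => [[_ irb] _]; rewrite ir irb.
    rewrite clS //; symmetry; apply: clY; try exact: fin.
    by apply: contraNneq ne => h; apply/eqP; exact: (finj a b aS bS h).
  - move=> i; apply: acyc_mono (acY i); apply/subsetP => x /imsetP [u uS ->].
    exact: fin.
case: IH => Tb' [eb' [kt' H']].
exists (PT eb' k l), (@pe Tb' eb' k l); split; first exact: pe_ktree.
move=> ord p LBE; case: (H' _ _ (restrict LBE)) => f' [finj fe facy].
set C := [set u in S | e v u].
have CS : C \subset S :\ v.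
  apply/subsetP => u; rewrite !inE => /andP [uS evu]; rewrite uS andbT.
  by apply: contraTneq evu => ->; rewrite ir.
have fmem : forall u, u \in S :\ v -> (f' u \in f' @: C) = (u \in C).
  move=> u uS; apply/imsetP/idP => [[a aC h]|uC]; last by exists u.
  by rewrite (finj u a uS (subsetP CS a aC) h).
have kK : kclq eb' k (f' @: C).
  apply: kclqI.
    rewrite card_in_imset // => a b aC bC; apply: finj; exact: (subsetP CS).
  move=> x y /imsetP [a aC ->] /imsetP [b bC ->] ne.
  rewrite -fe; try exact: (subsetP CS).
  by apply: clN => //; apply: contraNneq ne => ->.
have sy' : symmetric eb' by case: kt' => [[]].
case: (step_ok sy' LBE (exist (fun K => kclq eb' k K) _ kK)) => jj Hjj.
pose f u : PT eb' k l := if u == v then inr (exist (fun K => kclq eb' k K) _ kK, jj) else inl (f' u).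
exists f; split.
- move=> u1 u2 h1 h2; rewrite /f.
  case: (eqVneq u1 v) => [-> | n1]; case: (eqVneq u2 v) => [-> | n2] // h.
  case: h => /finj -> //; by rewrite !inE ?n1 ?n2 ?h1 ?h2.
- move=> u1 u2 h1 h2; rewrite /f.
  case: (eqVneq u1 v) => [-> | n1]; case: (eqVneq u2 v) => [-> | n2].
  + by rewrite ir.
  + by rewrite /= fmem ?inE ?n2 ?h2.
  + by rewrite sy /= fmem ?inE ?n1 ?h1.
  + by rewrite /= fe // !inE ?n1 ?n2 ?h1 ?h2.
- move=> i; apply: acyc_mono (Hjj _ facy i); apply/subsetP => x /imsetP [u uS ->].
  rewrite /f; case: eqP => [_|/eqP n]; rewrite !inE ?eqxx //.
  by rewrite inl_inl imset_f ?orbT // !inE n uS.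
Qed.

Theorem lemma2 (k l : nat) (T : finType) (e : rel T) :
  1 <= k -> is_ktree e k ->
  exists (Tb : finType) (eb : rel Tb),
    is_ktree eb k /\
    forall (ord : Tb -> nat) (p : Tb -> Tb -> nat),
      local_book_embedding l eb ord p ->
      contains_forest_embedding e eb ord p.
Proof.
move=> _ [sg kt].
case: (main_gen l sg kt) => Tb [eb [kb H]]; exists Tb, eb; split => // ord p LBE.
case: (H _ _ LBE) => f [finj fe facy]; exists f; split.
- by move=> a b; apply: finj; rewrite inE.
- by move=> a b; apply: fe; rewrite inE.
- move=> i; apply: acyc_mono (facy i); apply/subsetP => x /imsetP [u _ ->].
  by rewrite imset_f ?inE.
Qed.
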